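(* Let $L\subset\mathbb{Z}^m$ be a non-zero lattice with $L\cap\mathbb{N}^m=\{\mathbf 0\}$ and $\mathrm{Sat}(L)=\ker_{\mathbb{Z}}(\mathcal{A})$. If $E\in\mathcal{T}_{\min}$, then (1) there is no circuit $\mathbf x^{\mathbf u_+}-\mathbf x^{\mathbf u_-}\in I_{\mathcal{A}}$ with $\mathrm{supp}(\mathbf x^{\mathbf u_+})\subsetneq E$ or $\mathrm{supp}(\mathbf x^{\mathbf u_-})\subsetneq E$; and (2) there exists a circuit $\mathbf x^{\mathbf u_+}-\mathbf x^{\mathbf u_-}\in I_{\mathcal{A}}$ with $\mathrm{supp}(\mathbf x^{\mathbf u_+})=E$ or $\mathrm{supp}(\mathbf x^{\mathbf u_-})=E$.
   Context: $K$ is a field, $\mathbf x^{\mathbf u}=x_1^{u_1}\cdots x_m^{u_m}$, and $\mathbf u_\pm$ are the positive/negative parts of $\mathbf u\in\mathbb{Z}^m$. $I_L=(\mathbf x^{\mathbf u_+}-\mathbf x^{\mathbf u_-}:\mathbf u\in L)\subset K[x_1,\ldots,x_m]$; $\mathrm{Sat}(L)=\{\mathbf u: d\mathbf u\in L\text{ for some nonzero } d\in\mathbb{Z}\}$; $\mathcal{A}=\{\mathbf a_1,\ldots,\mathbf a_m\}\subset\mathbb{Z}^n$, $\ker_{\mathbb{Z}}(\mathcal{A})=\{\mathbf q\in\mathbb{Z}^m:\sum q_i\mathbf a_i=0\}$, and $I_{\mathcal{A}}=I_{\ker_{\mathbb{Z}}(\mathcal{A})}$. A circuit is a nonzero $\mathbf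 u\in\ker_{\mathbb{Z}}(\mathcal{A})$ whose support $\mathrm{supp}(\mathbf u)=\{i:u_i\ne0\}$ is inclusion-minimal among nonzero vectors of $\ker_{\mathbb{Z}}(\mathcal{A})$ and whose coordinates are relatively prime; the binomial $\mathbf x^{\mathbf u_+}-\mathbf x^{\mathbf u_-}$ is then also called a circuit. $\mathrm{supp}(\mathbf x^{\mathbf w})=\mathrm{supp}(\mathbf w)$. A monomial $M$ is indispensable of $I_L$ if every system of binomial generators of $I_L$ contains a binomial having $M$ as a monomial. $\mathcal{T}_{\min}$ is the set of inclusion-minimal elements of the set of supports of indispensable monomials of $I_L$. *)

(* Defs.v *)
From mathcomp Require Import all_boot all_order all_algebra.
From mathcomp Require Import mpoly.
Set Implicit Arguments. Unset Strict Implicit. Unset Printing Implicit Defensive.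
Import Order.TTheory GRing.Theory Num.Theory.
Local Open Scope ring_scope.

Definition is_lattice (m : nat) (L : 'rV[int]_m -> Prop) : Prop :=
  L 0 /\ (forall u v, L u -> L v -> L (u - v)).

Definition Sat (m : nat) (L : 'rV[int]_m -> Prop) (u : 'rV[int]_m) : Prop :=
  exists d : int, d != 0 /\ L (d *: u).

(* ker_Z(A), where A = {a_1,...,a_m} subset Z^n is given as the m x n integer
   matrix whose i-th row is a_i; sum_i u_i a_i = u *m A. *)
Definition kerZ (m n : nat) (A : 'M[int]_(m, n)) (u : 'rV[int]_m) : Prop :=
  u *m A = 0.

Definition posp (z : int) : nat := if 0 <= z then absz z else 0%N.
Definition negp (z : int) : nat := if z < 0 then absz z else 0%N.
Definition upos (m : nat) (u : 'rV[int]_m) : 'X_{1..m} := [multinom posp (u ord0 i) | i < m].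
Definition uneg (m : nat) (u : 'rV[int]_m) : 'X_{1..m} := [multinom negp (u ord0 i) | i < m].

Definition binom (K : fieldType) (m : nat) (a b : 'X_{1..m}) : {mpoly K[m]} :=
  'X_[a] - 'X_[b].

Definition in_ideal (K : fieldType) (m : nat) (G : {mpoly K[m]} -> Prop)
  (f : {mpoly K[m]}) : Prop :=
  exists s : seq ({mpoly K[m]} * {mpoly K[m]}),
    (forall p, p \in s -> G p.2) /\ f = \sum_(p <- s) p.1 * p.2.

Definition IL_gens (K : fieldType) (m : nat) (L : 'rV[int]_m -> Prop)
  (f : {mpoly K[m]}) : Prop :=
  exists u, L u /\ f = @binom K m (upos u) (uneg u).

Definition IL (K : fieldType) (m : nat) (L : 'rV[int]_m -> Prop) (f : {mpoly K[m]}) : Prop :=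
  in_ideal (@IL_gens K m L) f.

Definition binomial_generating_system (K : fieldType) (m : nat)
  (L : 'rV[int]_m -> Prop) (S : ('X_{1..m} * 'X_{1..m}) -> Prop) : Prop :=
  (forall p, S p -> p.1 != p.2) /\
  (forall f, in_ideal (fun g => exists p, S p /\ g = @binom K m p.1 p.2) f <-> @IL K m L f).

Definition indispensable_monomial (K : fieldType) (m : nat)
  (L : 'rV[int]_m -> Prop) (w : 'X_{1..m}) : Prop :=
  forall S, @binomial_generating_system K m L S ->
    exists p, S p /\ (p.1 = w \/ p.2 = w).

Definition mnmsupp (m : nat) (w : 'X_{1..m}) : {set 'I_m} := [set i | w i != 0%N].

Definition indisp_supports (K : fieldType) (m : nat) (L : 'rV[int]_m -> Prop)
  (E : {set 'I_m}) : Prop :=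
  exists w, @indispensable_monomial K m L w /\ mnmsupp w = E.

Definition Tmin (K : fieldType) (m : nat) (L : 'rV[int]_m -> Prop) (E : {set 'I_m}) : Prop :=
  @indisp_supports K m L E /\
  (forall F, @indisp_supports K m L F -> F \subset E -> F = E).

Definition vsupp (m : nat) (u : 'rV[int]_m) : {set 'I_m} := [set i | u ord0 i != 0].

Definition circuit (m n : nat) (A : 'M[int]_(m, n)) (u : 'rV[int]_m) : Prop :=
  [/\ kerZ A u, u != 0,
      (forall v, kerZ A v -> v != 0 -> vsupp v \subset vsupp u -> vsupp v = vsupp u)
    & (forall d : int, (forall i, (d %| u ord0 i)%Z) -> `|d| = 1)].

(* Main.v *)
Require Import Defs.
From mathcomp Require Import all_boot all_order all_algebra.
From mathcomp Require Import mpoly.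
From mathcomp Require Import zify.
From Stdlib Require Import Classical.
Import Order.TTheory GRing.Theory Num.Theory.
Set Implicit Arguments. Unset Strict Implicit. Unset Printing Implicit Defensive.
Local Open Scope ring_scope.

Lemma posp_gt0 (z : int) : (0 < posp z)%N = (0 < z).
Proof. rewrite /posp; case: ifP; lia. Qed.

Lemma posp_negp (z : int) : posp (- z) = negp z.
Proof. rewrite /posp /negp; case: ifP; case: ifP; lia. Qed.

Lemma posp_eq_negp (z : int) : posp z = negp z -> z = 0.
Proof. rewrite /posp /negp; case: ifP; case: ifP; lia. Qed.

Lemma uposE m (u : 'rV[int]_m) i : upos u i = posp (u ord0 i).
Proof. by rewrite /upos mnmE. Qed.
Lemma unegE m (u : 'rV[int]_m) i : uneg u i = negp (u ord0 i).
Proof. by rewrite /uneg mnmE. Qed.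

Lemma uposN m (u : 'rV[int]_m) : upos (- u) = uneg u.
Proof. by apply/mnmP => i; rewrite uposE unegE mxE posp_negp. Qed.

Lemma upos_neq_uneg m (u : 'rV[int]_m) : u != 0 -> upos u != uneg u.
Proof.
apply: contra => /eqP e; apply/eqP/matrixP => i j.
rewrite !ord1 mxE; apply: posp_eq_negp.
by rewrite -uposE -unegE e.
Qed.

Lemma supp_upos m (u : 'rV[int]_m) : mnmsupp (upos u) = [set i | 0 < u ord0 i].
Proof. by apply/setP => i; rewrite !inE uposE -lt0n posp_gt0. Qed.

Lemma coefX_mul (K : fieldType) m (q : {mpoly K[m]}) a x :
  (q * 'X_[a])@_x != 0 -> forall i, (a i <= x i)%N.
Proof.
rewrite -mcoeff_msupp (perm_mem (msuppMX q a)) => /mapP [m' _ ->] i.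
by rewrite mnmDE leq_addr.
Qed.

Lemma ideal_coef (K : fieldType) m (P : 'X_{1..m} -> 'X_{1..m} -> Prop)
  (s : seq ({mpoly K[m]} * {mpoly K[m]})) x :
  (forall p, p \in s -> exists a b, P a b /\ p.2 = 'X_[a] - 'X_[b]) ->
  (\sum_(p <- s) p.1 * p.2)@_x != 0 ->
  exists a b, P a b /\ a != b /\
    ((forall i, (a i <= x i)%N) \/ (forall i, (b i <= x i)%N)).
Proof.
elim: s => [|p s IH]; first by move=> _; rewrite big_nil mcoeff0 eqxx.
move=> HG.
rewrite big_cons mcoeffD; case: (eqVneq ((p.1 * p.2)@_x) 0) => h.
  rewrite h add0r; apply: IH => q qin; apply: (HG q); by rewrite inE qin orbT.
have [a [b [Pab e]]] := HG p (mem_head _ _).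
move=> _; exists a, b; split=> //.
move: h; rewrite e mulrBr mcoeffB.
case: (eqVneq a b) => [->|ab]; first by rewrite subrr eqxx.
move=> h; split=> //; case: (eqVneq ((p.1 * 'X_[a])@_x) 0) => ha.
  by move: h; rewrite ha sub0r oppr_eq0 => /coefX_mul; right.
by left; apply: coefX_mul ha.
Qed.

Lemma binom_coef (K : fieldType) m (a b x : 'X_{1..m}) :
  a != b -> (x = a \/ x = b) -> (@binom K m a b)@_x != 0.
Proof.
move=> ab; have ba : (b == a) = false by rewrite eq_sym (negbTE ab).
move=> [->|->]; rewrite /binom mcoeffB !mcoeffX eqxx.
  by rewrite ba subr0 oner_eq0.
by rewrite (negbTE ab) sub0r oppr_eq0 oner_eq0.
Qed.

Lemma upos0 m : upos (0 : 'rV[int]_m) = uneg 0.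
Proof. by apply/mnmP => i; rewrite uposE unegE mxE. Qed.

Lemma lattice_opp m (L : 'rV[int]_m -> Prop) : is_lattice L -> forall u, L u -> L (- u).
Proof. by case=> L0 Lsub u Lu; rewrite -sub0r; apply: Lsub. Qed.

Definition S0 m (L : 'rV[int]_m -> Prop) (p : 'X_{1..m} * 'X_{1..m}) : Prop :=
  exists u, L u /\ u != 0 /\ p = (upos u, uneg u).

Lemma S0_gen (K : fieldType) m (L : 'rV[int]_m -> Prop) :
  @binomial_generating_system K m L (S0 L).
Proof.
split.
  by move=> p [u [_ [u0 ->]]]; exact: upos_neq_uneg.
move=> f; split.
  move=> [s [Hs ->]]; exists s; split=> // p /Hs [q [[u [Lu [_ ->]]] ->]].
  by exists u.
move=> [s [Hs ->]].
exists [seq p <- s | p.2 != 0]; split.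
  move=> p; rewrite mem_filter => /andP [nz /Hs [u [Lu e]]].
  exists (upos u, uneg u); split=> //; exists u; split=> //; split=> //.
  apply: contraNneq nz => u0; by rewrite e u0 upos0 /binom subrr.
rewrite big_filter [RHS]big_mkcond; apply: eq_bigr => p _.
by case: ifP => // /negbFE/eqP ->; rewrite mulr0.
Qed.

Lemma indisp_vec (K : fieldType) m (L : 'rV[int]_m -> Prop) w :
  is_lattice L -> @indispensable_monomial K m L w ->
  exists v, L v /\ v != 0 /\ upos v = w.
Proof.
move=> HL /(_ _ (S0_gen K L)) [p [[u [Lu [u0 ->]]] [/= e|/= e]]].
  by exists u.
exists (-u); split; first exact: lattice_opp.
by split; [rewrite oppr_eq0 | rewrite uposN].
Qed.

Definition minimal_pos m (L : 'rV[int]_m -> Prop) (v : 'rV[int]_m) :=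
  L v /\ v != 0 /\
  forall v', L v' -> v' != 0 -> (forall i, (upos v' i <= upos v i)%N) -> upos v' = upos v.

Lemma mnm_anti m (a b : 'X_{1..m}) :
  (forall i, a i <= b i)%N -> (forall i, b i <= a i)%N -> a = b.
Proof. by move=> h1 h2; apply/mnmP => i; apply/eqP; rewrite eqn_leq h1 h2. Qed.

Lemma minimal_indisp (K : fieldType) m (L : 'rV[int]_m -> Prop) v :
  is_lattice L -> minimal_pos L v -> @indispensable_monomial K m L (upos v).
Proof.
move=> HL [Lv [v0 Hmin]] S [HS Hgen].
have key : forall c d x, c != d -> IL L (@binom K m c d) -> (x = c \/ x = d) ->
    (forall i, x i <= upos v i)%N -> x = upos v.
  move=> c d x cd [s' [Hs' Hsum']] hx Hc.
  have := @binom_coef K _ _ _ _ cd hx.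
  rewrite Hsum' => /(ideal_coef (P := fun a b => exists u, L u /\ a = upos u /\ b = uneg u)) [].
    by move=> p /Hs' [u [Lu ->]]; exists (upos u), (uneg u); split => //; exists u.
  move=> a' [b' [[u [Lu [ea eb]]] [ne Hle']]].
  have u0 : u != 0 by apply: contraNneq ne => u0; rewrite ea eb u0 upos0.
  have [v' [Lv' [v'0 Hv']]] : exists v', L v' /\ v' != 0 /\ (forall i, upos v' i <= x i)%N.
    case: Hle' => h; first by exists u; rewrite -ea.
    exists (-u); split; first exact: lattice_opp.
    by split; [rewrite oppr_eq0 | rewrite uposN -eb].
  have e := Hmin v' Lv' v'0 (fun i => leq_trans (Hv' i) (Hc i)).
  by apply: mnm_anti => // i; rewrite -e Hv'.
have : IL L (binom K (upos v) (uneg v)).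
  exists [:: (1, binom K (upos v) (uneg v))]; split.
    by move=> p; rewrite inE => /eqP -> /=; exists v.
  by rewrite big_seq1 mul1r.
move=> /Hgen [s [Hs Hsum]].
have := @binom_coef K _ _ _ _ (upos_neq_uneg v0) (or_introl erefl).
rewrite Hsum => /(ideal_coef (P := fun a b => S (a, b))) [].
  by move=> p /Hs [q [Sq ->]]; exists q.1, q.2; split; [case: q Sq | ].
move=> a [b [Sab [ab Hle]]].
have ILab : IL L (binom K a b).
  apply/Hgen; exists [:: (1, binom K a b)]; split.
    by move=> p; rewrite inE => /eqP -> /=; exists (a, b).
  by rewrite big_seq1 mul1r.
exists (a, b); split=> //=.
case: Hle => h; [left | right]; apply: (key a b) => //; by [left | right].
Qed.

Lemma mdeg_lt m (a b : 'X_{1..m}) :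
  (forall i, a i <= b i)%N -> a != b -> (mdeg a < mdeg b)%N.
Proof.
move=> h ne.
have e : b = (a + (b - a))%MM by apply/mnmP => i; rewrite mnmDE mnmBE subnKC.
rewrite [in X in (_ < X)%N]e mdegD -[X in (X < _)%N]addn0 ltn_add2l lt0n mdeg_eq0.
by apply: contra ne => /eqP h0; rewrite [X in _ == X]e h0 addm0.
Qed.

Lemma exists_minimal m (L : 'rV[int]_m -> Prop) u : L u -> u != 0 ->
  exists v, minimal_pos L v /\ (forall i, upos v i <= upos u i)%N.
Proof.
move=> Lu u0.
suff H : forall N u, L u -> u != 0 -> (mdeg (upos u) <= N)%N ->
    exists v, minimal_pos L v /\ (forall i, upos v i <= upos u i)%N.
  exact: (H _ u Lu u0 (leqnn _)).
elim=> [|N IH] u' Lu' u'0 hN;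
  case: (classic (exists v', L v' /\ v' != 0 /\
      (forall i, upos v' i <= upos u' i)%N /\ upos v' != upos u')).
- by move=> [v' [_ [_ [h ne]]]]; have := mdeg_lt h ne; rewrite ltnNge (leq_trans hN).
- move=> Hn; exists u'; split=> //; split=> //; split=> // v' Lv' v'0 h.
  case: (eqVneq (upos v') (upos u')) => // ne; exfalso; apply: Hn; exists v'; by [].
- move=> [v' [Lv' [v'0 [h ne]]]].
  have [w [Hw hw]] := IH v' Lv' v'0 (leq_trans (mdeg_lt h ne) hN).
  by exists w; split=> // i; apply: leq_trans (hw i) (h i).
- move=> Hn; exists u'; split=> //; split=> //; split=> // v' Lv' v'0 h.
  case: (eqVneq (upos v') (upos u')) => // ne; exfalso; apply: Hn; exists v'; by [].
Qed.
Definition conf m (c v : 'rV[int]_m) := forall i,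
  (0 < c ord0 i -> 0 < v ord0 i) /\ (c ord0 i < 0 -> v ord0 i < 0).

Lemma conf_refl m (c : 'rV[int]_m) : conf c c.
Proof. by move=> i. Qed.

Lemma conf_trans m (a b c : 'rV[int]_m) : conf a b -> conf b c -> conf a c.
Proof.
move=> h1 h2 i; have [h1a h1b] := h1 i; have [h2a h2b] := h2 i.
by split=> h; [apply: h2a; apply: h1a | apply: h2b; apply: h1b].
Qed.

Lemma conf_supp m (c v : 'rV[int]_m) : conf c v -> vsupp c \subset vsupp v.
Proof.
move=> h; apply/subsetP => i; rewrite !inE; have [h1 h2] := h i.
move: h1 h2; lia.
Qed.

Lemma row_neq0 m (c : 'rV[int]_m) : c != 0 -> exists i, c ord0 i != 0.
Proof.
move=> c0; case: (pickP (fun i => c ord0 i != 0)) => [i hi|h]; first by exists i.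
case/eqP: c0; apply/matrixP => i j; rewrite !ord1 mxE.
by have := h j; move/negbFE/eqP.
Qed.

Lemma kerZ_comb m n (A : 'M[int]_(m, n)) (c c' : 'rV[int]_m) (a b : int) :
  kerZ A c -> kerZ A c' -> kerZ A (a *: c - b *: c').
Proof.
by rewrite /kerZ => h h'; rewrite mulmxBl -!scalemxAl h h' !scaler0 subr0.
Qed.

Lemma kerZN m n (A : 'M[int]_(m, n)) (c : 'rV[int]_m) : kerZ A c -> kerZ A (- c).
Proof. by rewrite /kerZ mulNmx => ->; rewrite oppr0. Qed.

Lemma vsuppN m (c : 'rV[int]_m) : vsupp (- c) = vsupp c.
Proof. by apply/setP => i; rewrite !inE mxE oppr_eq0. Qed.

Lemma rat_cross (x y z t : int) : 0 < y -> 0 < t ->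
  (x%:~R / y%:~R <= z%:~R / t%:~R :> rat) -> x * t <= z * y.
Proof.
move=> y0 t0; rewrite ler_pdivlMr ?ltr0z // mulrAC ler_pdivrMr ?ltr0z //.
by rewrite -!intrM ler_int.
Qed.

Lemma step m n (A : 'M[int]_(m, n)) (c c' : 'rV[int]_m) :
  kerZ A c -> kerZ A c' -> c' != 0 -> vsupp c' \subset vsupp c ->
  vsupp c' != vsupp c ->
  exists w, [/\ kerZ A w, w != 0, conf w c & (#|vsupp w| < #|vsupp c|)%N].
Proof.
move=> kc kc' c'0 sub neq.
wlog [i0 Hi0] : c' kc' c'0 sub neq / exists i0, 0 < c' ord0 i0 * c ord0 i0.
  move=> W; have [i0 hi0] := row_neq0 c'0.
  have ci0 : c ord0 i0 != 0.
    by have := subsetP sub i0; rewrite !inE; apply.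
  have pr0 : c' ord0 i0 * c ord0 i0 != 0 by rewrite mulf_neq0.
  case: (ltP 0 (c' ord0 i0 * c ord0 i0)) => h.
    by apply: (W c' kc' c'0 sub neq); exists i0.
  apply: (W (- c')); rewrite ?vsuppN ?oppr_eq0 //; first exact: kerZN.
  by exists i0; rewrite mxE mulNr oppr_gt0 lt_neqAle pr0 h.
pose P := fun i => 0 < c' ord0 i * c ord0 i.
pose F := fun i => (`|c ord0 i|%:~R / `|c' ord0 i|%:~R : rat).
case: (@extremumP _ _ (@Order.le _ rat) i0 P F lexx le_trans le_total Hi0).
move=> j Pj Hj.
set a := `|c' ord0 j|; set b := `|c ord0 j|.
pose w := a *: c - b *: c'.
have wE : forall i, w ord0 i = a * c ord0 i - b * c' ord0 i by move=> i; rewrite !mxE.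
have hsub : forall i, c ord0 i = 0 -> c' ord0 i = 0.
  move=> i ci; apply/eqP; apply: contraT => h.
  by have := subsetP sub i; rewrite !inE ci eqxx; apply.
have a0 : 0 < a by rewrite /a normr_gt0; apply: contraTneq Pj => e; rewrite /P e mul0r ltxx.
have b0 : 0 < b by rewrite /b normr_gt0; apply: contraTneq Pj => e; rewrite /P e mulr0 ltxx.
have Fle : forall i, P i -> b * `|c' ord0 i| <= `|c ord0 i| * a.
  move=> i Pi; apply: rat_cross => //.
    by rewrite normr_gt0; apply: contraTneq Pi => e; rewrite /P e mul0r ltxx.
  exact: Hj.
have wc : conf w c.
  move=> i; rewrite wE; have := Fle i; have := hsub i; rewrite /P.
  move: Pj; rewrite /P /a /b; nia.
have wj : w ord0 j = 0.
  by rewrite wE; move: Pj; rewrite /P /a /b; nia.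
exists w; split=> //.
- exact: kerZ_comb.
- have : ~~ (vsupp c \subset vsupp c') by apply: contra neq => h; rewrite eqEsubset sub h.
  case/subsetPn => k; rewrite !inE => kk /negPn /eqP kk'.
  apply/eqP => /matrixP /(_ ord0 k); rewrite wE kk' mulr0 subr0 mxE => /eqP.
  by rewrite mulf_eq0 (negbTE kk) orbF => /eqP a00; move: a0; rewrite a00 ltxx.
- apply: proper_card; rewrite properE conf_supp //=.
  apply/subsetPn; exists j; rewrite !inE ?wj ?eqxx //.
  by apply: contraTneq Pj => e; rewrite /P e mulr0 ltxx.
Qed.

Lemma conf_min m n (A : 'M[int]_(m, n)) v : kerZ A v -> v != 0 ->
  exists c, [/\ kerZ A c, c != 0, conf c v &
    forall c', kerZ A c' -> c' != 0 -> vsupp c' \subset vsupp c -> vsupp c' = vsupp c].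
Proof.
move=> kv v0.
suff H : forall N c, kerZ A c -> c != 0 -> conf c v -> (#|vsupp c| <= N)%N ->
  exists c0, [/\ kerZ A c0, c0 != 0, conf c0 v &
    forall c', kerZ A c' -> c' != 0 -> vsupp c' \subset vsupp c0 -> vsupp c' = vsupp c0].
  exact: (H _ v kv v0 (@conf_refl _ v) (leqnn _)).
elim=> [|N IH] c kc c0 cv hN;
  case: (classic (exists c', [/\ kerZ A c', c' != 0, vsupp c' \subset vsupp c &
                                vsupp c' != vsupp c])).
- move=> [c' [kc' c'0 s ne]]; have [w [_ _ _ lt]] := step kc kc' c'0 s ne.
  by move: lt; rewrite ltnNge (leq_trans hN (leq0n _)).
- move=> Hn; exists c; split=> // c' kc' c'0 s.
  case: (eqVneq (vsupp c') (vsupp c)) => // ne; exfalso; apply: Hn; by exists c'.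
- move=> [c' [kc' c'0 s ne]]; have [w [kw w0 wc lt]] := step kc kc' c'0 s ne.
  apply: (IH w kw w0 (conf_trans wc cv)).
  by rewrite -ltnS (leq_trans lt hN).
- move=> Hn; exists c; split=> // c' kc' c'0 s.
  case: (eqVneq (vsupp c') (vsupp c)) => // ne; exfalso; apply: Hn; by exists c'.
Qed.

Lemma normalize m n (A : 'M[int]_(m, n)) c : kerZ A c -> c != 0 ->
  (forall c', kerZ A c' -> c' != 0 -> vsupp c' \subset vsupp c -> vsupp c' = vsupp c) ->
  exists c1, circuit A c1 /\ conf c1 c.
Proof.
move=> kc c0 hmin.
pose g := \big[gcdn/0%N]_(i < m) `|c ord0 i|%N.
have gdvd : forall i, (g %| `|c ord0 i|)%N.
  by move=> i; apply: (biggcdn_inf i) => //.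
have [i0 hi0] := row_neq0 c0.
have g0 : (0 < g)%N.
  rewrite lt0n; apply: contra hi0 => /eqP g00.
  by have := gdvd i0; rewrite g00 dvd0n absz_eq0.
have gZ : (g%:Z != 0) by rewrite eqz_nat -lt0n.
pose c1 := \row_i ((c ord0 i) %/ g%:Z)%Z.
have cE : forall i, c ord0 i = c1 ord0 i * g%:Z.
  by move=> i; rewrite mxE divzK // dvdzE /=.
have cc1 : c = g%:Z *: c1.
  by apply/matrixP => i j; rewrite !ord1 mxE cE mulrC.
have kc1 : kerZ A c1.
  move: kc; rewrite /kerZ cc1 -scalemxAl => /matrixP h; apply/matrixP => i j.
  by have := h i j; rewrite !mxE => /eqP; rewrite mulf_eq0 (negbTE gZ) /= => /eqP.
have c10 : c1 != 0 by apply: contraNneq c0 => e; rewrite cc1 e scaler0.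
have gpos : 0 < g%:Z by rewrite ltz_nat.
have conf1 : conf c1 c by move=> i; rewrite cE; move: gpos; nia.
have s1 : vsupp c1 = vsupp c.
  by apply/setP => i; rewrite !inE cE mulf_eq0 (negbTE gZ) orbF.
exists c1; split=> //; split=> //.
  by move=> v' kv' v'0; rewrite s1; apply: hmin.
move=> d hd.
have hdg : forall i, (`|d| * g %| `|c ord0 i|)%N.
  move=> i; have := dvdz_mul (hd i) (dvdzz g%:Z); rewrite -cE dvdzE.
  by rewrite abszM.
have : (`|d| * g %| 1 * g)%N by rewrite mul1n; apply/dvdn_biggcdP => i _; apply: hdg.
rewrite dvdn_pmul2r // dvdn1 => /eqP e.
by rewrite -abszE e.
Qed.

Lemma upos_scale m (u : 'rV[int]_m) (k : int) : 0 < k ->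
  mnmsupp (upos (k *: u)) = mnmsupp (upos u).
Proof. by move=> k0; rewrite !supp_upos; apply/setP => i; rewrite !inE mxE pmulr_rgt0. Qed.

Lemma supp_le m (a b : 'X_{1..m}) : (forall i, a i <= b i)%N -> mnmsupp a \subset mnmsupp b.
Proof.
by move=> h; apply/subsetP => i; rewrite !inE -!lt0n => /leq_trans; apply; exact: h.
Qed.

Lemma part1 (K : fieldType) m n (L : 'rV[int]_m -> Prop) (A : 'M[int]_(m, n)) E :
  is_lattice L -> (forall u, Sat L u <-> kerZ A u) -> @Tmin K m L E ->
  forall u, kerZ A u -> u != 0 -> ~ (mnmsupp (upos u) \proper E).
Proof.
move=> HL HS [_ HT] u ku u0 hp.
have [d [d0 Ld]] := (HS u).2 ku.
have [u' [Lu' [u'0 su']]] :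
    exists u', L u' /\ u' != 0 /\ mnmsupp (upos u') = mnmsupp (upos u).
  have [hd|hd] := ltP 0 d.
    exists (d *: u); split=> //; split; first by rewrite scalemx_eq0 negb_or d0.
    exact: upos_scale.
  exists ((- d) *: u); split; first by rewrite scaleNr; exact: lattice_opp.
  split; first by rewrite scalemx_eq0 negb_or oppr_eq0 d0.
  by apply: upos_scale; rewrite oppr_gt0 lt_neqAle d0 hd.
have [v [[Lv [v0 hmin]] vle]] := exists_minimal Lu' u'0.
have Iv := @minimal_indisp K _ _ _ HL (conj Lv (conj v0 hmin)).
have sv : mnmsupp (upos v) \subset mnmsupp (upos u) by rewrite -su'; apply: supp_le.
have eE := HT _ (ex_intro _ (upos v) (conj Iv erefl)) (subset_trans sv (proper_sub hp)).
by move: hp; rewrite properE -eE sv andbF.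
Qed.

Theorem lemma2p5 (K : fieldType) (m n : nat) (L : 'rV[int]_m -> Prop)
  (A : 'M[int]_(m, n)) (E : {set 'I_m}) :
  is_lattice L ->
  (exists u, L u /\ u != 0) ->
  (forall u, L u -> (forall i, 0 <= u ord0 i) -> u = 0) ->
  (forall u, Sat L u <-> kerZ A u) ->
  @Tmin K m L E ->
  (~ exists u, circuit A u /\
       (mnmsupp (upos u) \proper E \/ mnmsupp (uneg u) \proper E)) /\
  (exists u, circuit A u /\ (mnmsupp (upos u) = E \/ mnmsupp (uneg u) = E)).
Proof.
move=> HL _ _ HS HT.
have P1 := part1 HL HS HT.
split.
  move=> [u [[ku u0 _ _] [h|h]]]; first exact: (P1 u ku u0 h).
  by apply: (P1 (- u) (kerZN ku)); [rewrite oppr_eq0 | rewrite uposN].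
case: (HT) => [[w [Iw sw]] _].
have [v [Lv [v0 vw]]] := indisp_vec HL Iw.
have kv : kerZ A v by apply/HS; exists 1; split=> //; rewrite scale1r.
have [c [kc c0 cv hmin]] := conf_min kv v0.
have [c1 [circ c1c]] := normalize kc c0 hmin.
exists c1; split=> //; left.
have c1v := conf_trans c1c cv.
have sub : mnmsupp (upos c1) \subset E.
  rewrite -sw -vw !supp_upos; apply/subsetP => i; rewrite !inE.
  by case: (c1v i) => h _; apply: h.
case: circ => kc1 c10 _ _.
case: (eqVneq (mnmsupp (upos c1)) E) => // ne; exfalso.
by apply: (P1 c1 kc1 c10); rewrite properEneq ne sub.
Qed.
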